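(* Let $|\psi\rangle\in\mathcal H_A\otimes\mathcal H_{A'}\otimes\mathcal H_B\otimes\mathcal H_{B'}$ be an embedding of a primitive $P_{X,Y}$. Then $$\Delta_\psi(P_{X,Y})=S(X;BB')-I(X;Y)=S(AA';Y)-I(X;Y).$$
   Context: A primitive is a joint distribution $P_{X,Y}$ on finite sets $\mathcal X\times\mathcal Y$. $\mathcal H_A,\mathcal H_B$ have computational orthonormal bases indexed by $\mathcal X$ and $\mathcal Y$; $\mathcal H_{A'},\mathcal H_{B'}$ are finite-dimensional (possibly trivial) work spaces of Alice and Bob. For a pure state $|\psi\rangle$ on $AA'BB'$, $X$ (resp. $Y$) denotes the outcome of measuring $A$ (resp. $B$) in the computational basis; entropic quantities are evaluated on the state obtained from $|\psi\rangle\langle\psi|$ by measuring exactly the registers named by $X$ or $Y$ and tracing out registers not mentioned (e.g. $S(X;BB')$: measure $A$, trace out $A'$, keep $BB'$ quantum; $S(AA';Y)$: measure $B$, trace out $B'$, keep $AA'$; $S(X;YB')$: measure $A,B$, trace out $A'$). Here $S(P;Q)=S(P)+S(Q)-S(PQ)$ with $S$ the von Neumann entropy, and $I(X;Y)$ is Shannon mutual information. $|\psi\rangle$ is an embedding of $P_{X,Y}$ if measuring $A$ and $B$ in the computational basis yields $(X,Y)$ distributed as $P_{X,Y}$ and $S(X;YB')=S(XA';Y)=I(X;Y)$. Its leakage is $\Delta_\psi(P_{X,Y}):=\max\{S(X;BB')-I(X;Y),\,S(AA';Y)-I(X;Y)\}$. *)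

(* Defs.v *)
From mathcomp Require Import all_boot all_order all_algebra.
From mathcomp Require Import complex.
From mathcomp Require Import reals exp.
Set Implicit Arguments. Unset Strict Implicit. Unset Printing Implicit Defensive.
Import Order.TTheory GRing.Theory Num.Theory.
Local Open Scope ring_scope.

(* eta(t) = - t ln t  (with the convention 0 ln 0 = 0; ln t = 0 for t <= 0) *)
Definition eta_fun (R : realType) (t : R) : R := - (t * ln t).

(* An operator on the Hilbert space with orthonormal basis indexed by the
   finite type K, given by its matrix entries, turned into a square matrix. *)
Definition mx_of (R : realType) (K : finType) (f : K -> K -> R[i]) : 'M[R[i]]_#|K| :=
  \matrix_(i, j) f (enum_val i) (enum_val j).

Definition spectrum (R : realType) (n : nat) (M : 'M[R[i]]_n) : seq R[i] :=
  sval (closed_field_poly_normal (char_poly M)).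

Definition vN_entropy (R : realType) (K : finType) (rho : K -> K -> R[i]) : R :=
  \sum_(z <- spectrum (mx_of rho)) eta_fun (@complex.Re R z).

Definition ptrace2 (R : realType) (L M : finType) (rho : L * M -> L * M -> R[i])
  : L -> L -> R[i] := fun l l' => \sum_(m : M) rho (l, m) (l', m).
Definition ptrace1 (R : realType) (L M : finType) (rho : L * M -> L * M -> R[i])
  : M -> M -> R[i] := fun m m' => \sum_(l : L) rho (l, m) (l, m').

Definition qmutinf (R : realType) (L M : finType) (rho : L * M -> L * M -> R[i]) : R :=
  vN_entropy (ptrace2 rho) + vN_entropy (ptrace1 rho) - vN_entropy rho.

(* The pure state |psi> on A A' B B' is given by its amplitudes
   psi x a y b = <x,a,y,b|psi>, with x : X (basis of A), a : A' , y : Y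
   (basis of B), b : B'.  The following are the (classical-)quantum states
   obtained from |psi><psi| by measuring the named computational registers
   and tracing out the unnamed ones. *)

(* S(X;BB'): measure A, trace out A', keep B B' quantum.  State on X (x) (B B'). *)
Definition rho_X_BB' (R : realType) (X A' Y B' : finType)
  (psi : X -> A' -> Y -> B' -> R[i]) : X * (Y * B') -> X * (Y * B') -> R[i] :=
  fun u v => ((u.1 == v.1)%:R : R[i]) *
    \sum_(a : A') psi u.1 a u.2.1 u.2.2 * (psi v.1 a v.2.1 v.2.2)^*.

(* S(AA';Y): measure B, trace out B', keep A A' quantum.  State on (A A') (x) Y. *)
Definition rho_AA'_Y (R : realType) (X A' Y B' : finType)
  (psi : X -> A' -> Y -> B' -> R[i]) : (X * A') * Y -> (X * A') * Y -> R[i] :=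
  fun u v => ((u.2 == v.2)%:R : R[i]) *
    \sum_(b : B') psi u.1.1 u.1.2 u.2 b * (psi v.1.1 v.1.2 v.2 b)^*.

(* S(X;YB'): measure A and B, trace out A'.  State on X (x) (Y B'). *)
Definition rho_X_YB' (R : realType) (X A' Y B' : finType)
  (psi : X -> A' -> Y -> B' -> R[i]) : X * (Y * B') -> X * (Y * B') -> R[i] :=
  fun u v => ((u.1 == v.1)%:R : R[i]) * ((u.2.1 == v.2.1)%:R : R[i]) *
    \sum_(a : A') psi u.1 a u.2.1 u.2.2 * (psi v.1 a v.2.1 v.2.2)^*.

(* S(XA';Y): measure A and B, trace out B'.  State on (X A') (x) Y. *)
Definition rho_XA'_Y (R : realType) (X A' Y B' : finType)
  (psi : X -> A' -> Y -> B' -> R[i]) : (X * A') * Y -> (X * A') * Y -> R[i] :=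
  fun u v => ((u.1.1 == v.1.1)%:R : R[i]) * ((u.2 == v.2)%:R : R[i]) *
    \sum_(b : B') psi u.1.1 u.1.2 u.2 b * (psi v.1.1 v.1.2 v.2 b)^*.

Definition is_distr (R : realType) (X Y : finType) (P : X * Y -> R) : Prop :=
  (forall xy, 0 <= P xy) /\ \sum_(xy : X * Y) P xy = 1.

Definition shannon (R : realType) (T : finType) (p : T -> R) : R :=
  \sum_(t : T) eta_fun (p t).
Definition mutinf (R : realType) (X Y : finType) (P : X * Y -> R) : R :=
  shannon (fun x : X => \sum_(y : Y) P (x, y))
  + shannon (fun y : Y => \sum_(x : X) P (x, y))
  - shannon P.

Definition is_embedding (R : realType) (X A' Y B' : finType)
  (P : X * Y -> R) (psi : X -> A' -> Y -> B' -> R[i]) : Prop :=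
  (forall (x : X) (y : Y),
      real_complex R (P (x, y)) = \sum_(a : A') \sum_(b : B') psi x a y b * (psi x a y b)^*)
  /\ qmutinf (rho_X_YB' psi) = mutinf P
  /\ qmutinf (rho_XA'_Y psi) = mutinf P.

Definition leakage (R : realType) (X A' Y B' : finType)
  (P : X * Y -> R) (psi : X -> A' -> Y -> B' -> R[i]) : R :=
  Num.max (qmutinf (rho_X_BB' psi) - mutinf P) (qmutinf (rho_AA'_Y psi) - mutinf P).

(* Main.v *)
Require Import Defs.
From mathcomp Require Import all_boot all_order all_algebra.
From mathcomp Require Import complex.
From mathcomp Require Import reals exp.
From mathcomp Require Import fingroup perm.
From mathcomp Require Import lra.
Set Implicit Arguments. Unset Strict Implicit. Unset Printing Implicit Defensive.
Import Order.TTheory GRing.Theory Num.Theory.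
Local Open Scope ring_scope.

Section Ent.
Variable R : realType.
Local Notation C := (R[i]).

Definition sp_of (p : {poly C}) : seq C := sval (closed_field_poly_normal p).
Definition entp (p : {poly C}) : R := \sum_(z <- sp_of p) eta_fun (complex.Re z).

Lemma vN_entp (K : finType) (rho : K -> K -> C) :
  vN_entropy rho = entp (char_poly (mx_of rho)).
Proof. by []. Qed.

Lemma monic_split p : p \is monic -> p = \prod_(z <- sp_of p) ('X - z%:P).
Proof.
move=> mp; rewrite /sp_of; case: (closed_field_poly_normal p) => r /= {1}->.
by rewrite (monicP mp) scale1r.
Qed.

Lemma entp_prod s : entp (\prod_(z <- s) ('X - z%:P)) = \sum_(z <- s) eta_fun (complex.Re z).
Proof.
rewrite /entp; apply: perm_big; apply: prod_XsubC_eq.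
by rewrite -monic_split // monic_prod_XsubC.
Qed.

Lemma entpM p q : p \is monic -> q \is monic -> entp (p * q) = entp p + entp q.
Proof.
move=> mp mq; rewrite (monic_split mp) (monic_split mq) -big_cat entp_prod big_cat.
by rewrite !entp_prod.
Qed.

Lemma entp1 : entp 1 = 0.
Proof. by have := entp_prod [::]; rewrite !big_nil. Qed.

Lemma entp_bigprod (I : finType) (F : I -> {poly C}) :
  (forall i, F i \is monic) -> entp (\prod_i F i) = \sum_i entp (F i).
Proof.
move=> mF.
suff : (\prod_i F i) \is monic /\ entp (\prod_i F i) = \sum_i entp (F i) by case.
apply: (big_ind2 (fun p e => p \is monic /\ entp p = e)).
- by rewrite monic1 entp1.
- by move=> p e q d [mp <-] [mq <-]; rewrite monicMl // entpM.
- by move=> i _; split.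
Qed.

Lemma eta0 : eta_fun (0 : R) = 0.
Proof. by rewrite /eta_fun mul0r oppr0. Qed.

Lemma entp_Xn n p : p \is monic -> entp ('X^n * p) = entp p.
Proof.
move=> mp; rewrite entpM ?monicXn //.
have -> : 'X^n = \prod_(z <- nseq n (0 : C)) ('X - z%:P).
  elim: n => [|n IH]; first by rewrite big_nil expr0.
  by rewrite /= big_cons exprS IH polyC0 subr0.
rewrite entp_prod; suff -> : \sum_(z <- nseq n (0 : C)) eta_fun (complex.Re z) = 0 by rewrite add0r.
elim: n => [|n IH]; first by rewrite big_nil.
by rewrite /= big_cons IH addr0 /= eta0.
Qed.

Lemma entp_cancel m n p q : p \is monic -> q \is monic ->
  'X^m * p = 'X^n * q -> entp p = entp q.
Proof. by move=> mp mq /(congr1 entp); rewrite !entp_Xn. Qed.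


Lemma det_permconj (T : comNzRingType) n (s : 'S_n) (B : 'M[T]_n) :
  \det (\matrix_(i, j) B (s i) (s j)) = \det B.
Proof.
have -> : \matrix_(i, j) B (s i) (s j) = row_perm s (col_perm s B).
  by apply/matrixP => i j; rewrite !mxE.
rewrite row_permE col_permE !det_mulmx !det_perm odd_permV.
by rewrite mulrCA -expr2 sqrr_sign mulr1.
Qed.

Lemma charpoly_permconj n (s : 'S_n) (A : 'M[C]_n) :
  char_poly (\matrix_(i, j) A (s i) (s j)) = char_poly A.
Proof.
rewrite /char_poly -(det_permconj s (char_poly_mx A)); congr (\det _).
apply/matrixP => i j; rewrite !mxE (inj_eq perm_inj).
by [].
Qed.

Definition cp (K : finType) (f : K -> K -> C) := char_poly (mx_of f).

Lemma cp_ext (K : finType) (f g : K -> K -> C) : f =2 g -> cp f = cp g.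
Proof. by move=> fg; rewrite /cp; congr char_poly; apply/matrixP => i j; rewrite !mxE fg. Qed.

Lemma cp_bij (K : finType) n (h : 'I_n -> K) (f : K -> K -> C) : bijective h ->
  char_poly (\matrix_(i, j) f (h i) (h j)) = cp f.
Proof.
move=> hb; have En : n = #|K| by rewrite -(bij_eq_card hb) card_ord.
subst n.
have hi : injective (enum_rank \o h) by apply: inj_comp; [apply: enum_rank_inj | apply: bij_inj].
set s := perm hi.
rewrite /cp -(charpoly_permconj s (mx_of f)); congr char_poly.
by apply/matrixP => i j; rewrite !mxE !permE /= !enum_rankK.
Qed.

Lemma cp_reindex (K K' : finType) (e : K -> K') (f : K' -> K' -> C) : bijective e ->
  cp (fun u v => f (e u) (e v)) = cp f.
Proof.
move=> eb; rewrite {1}/cp /mx_of.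
apply: (cp_bij (h := fun i => e (enum_val i))).
by apply: bij_comp => //; apply: enum_val_bij.
Qed.


Lemma char_poly_block m n (A : 'M[C]_m) (B : 'M[C]_n) :
  char_poly (block_mx A 0 0 B) = char_poly A * char_poly B.
Proof.
rewrite /char_poly /char_poly_mx (scalar_mx_block m n) map_block_mx !map_mx0.
by rewrite opp_block_mx add_block_mx !oppr0 !addr0 det_ublock.
Qed.

Lemma cp_sum (K1 K2 : finType) (f : K1 + K2 -> K1 + K2 -> C) :
  (forall a b, f (inl a) (inr b) = 0) -> (forall a b, f (inr b) (inl a) = 0) ->
  cp f = cp (fun a a' => f (inl a) (inl a')) * cp (fun b b' => f (inr b) (inr b')).
Proof.
move=> f12 f21.
pose h := fun i : 'I_(#|K1| + #|K2|) =>
  match split i with inl j => inl (enum_val j) | inr j => inr (enum_val j) end.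
have hb : bijective h.
  exists (fun u => unsplit (match u with inl a => inl (enum_rank a) | inr b => inr (enum_rank b) end)).
    move=> i; rewrite /h -{2}(splitK i); case: (split i) => j /=; by rewrite enum_valK.
  by case=> [a|b]; rewrite /h unsplitK enum_rankK.
rewrite -(cp_bij f hb).
have -> : \matrix_(i, j) f (h i) (h j) =
    block_mx (mx_of (fun a a' => f (inl a) (inl a'))) 0 0 (mx_of (fun b b' => f (inr b) (inr b'))).
  apply/matrixP => i j; rewrite mxE -(splitK i) -(splitK j).
  case: (split i) => i'; case: (split j) => j'; rewrite /h !unsplitK /=.
  - by rewrite block_mxEul mxE.
  - by rewrite block_mxEur mxE f12.
  - by rewrite block_mxEdl mxE f21.
  - by rewrite block_mxEdr mxE.
by rewrite char_poly_block.
Qed.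


Lemma cp_empty (K : finType) (f : K -> K -> C) : #|K| = 0%N -> cp f = 1.
Proof.
move=> E; rewrite /cp; set p := char_poly _.
have mp : p \is monic by apply: char_poly_monic.
have sp : size p = 1%N by rewrite /p size_char_poly E.
rewrite (size1_polyC (eq_leq sp)).
have <- : lead_coef p = p`_0 by rewrite lead_coefE sp.
by rewrite (monicP mp).
Qed.

Lemma cp_block_ord n (K : finType) (f : 'I_n -> K -> K -> C) :
  cp (fun u v : 'I_n * K => (u.1 == v.1)%:R * f u.1 u.2 v.2) = \prod_i cp (f i).
Proof.
elim: n f => [|n IH] f.
  by rewrite big_ord0 cp_empty // card_prod card_ord mul0n.
pose e := fun u : K + ('I_n * K) =>
  match u with inl k => (ord0, k) | inr p => (lift ord0 p.1, p.2) end.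
have eb : bijective e.
  exists (fun p : 'I_n.+1 * K => match unlift ord0 p.1 with Some j => inr (j, p.2) | None => inl p.2 end).
    by case=> [k|[j k]]; rewrite /e /= ?unlift_none ?liftK.
  by case=> i k /=; case: unliftP => [j|] ->.
rewrite -(cp_reindex _ eb) cp_sum; first last.
- by move=> a [j k]; rewrite /e /= ?(negbTE (neq_lift _ _)) mul0r.
- by move=> a [j k]; rewrite /e /= ?eq_sym ?(negbTE (neq_lift _ _)) mul0r.
rewrite big_ord_recl -IH; congr (_ * _).
  by apply: cp_ext => a a'; rewrite /e /= ?eqxx mul1r.
Qed.

Lemma cp_block (L K : finType) (f : L -> K -> K -> C) :
  cp (fun u v : L * K => (u.1 == v.1)%:R * f u.1 u.2 v.2) = \prod_l cp (f l).
Proof.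
pose e := fun p : 'I_#|L| * K => (enum_val p.1, p.2).
have eb : bijective e.
  exists (fun p : L * K => (enum_rank p.1, p.2)).
    by case=> i k; rewrite /e /= enum_valK.
  by case=> l k; rewrite /e /= enum_rankK.
rewrite -(cp_reindex _ eb) (reindex (fun i : 'I_#|L| => enum_val i)); last first.
  by apply: onW_bij; apply: enum_val_bij.
rewrite -(cp_block_ord (fun i => f (enum_val i))).
by apply: cp_ext => [[i k] [j k']]; rewrite /e /= (inj_eq enum_val_inj).
Qed.

Lemma cp_diag (L : finType) (d : L -> C) :
  cp (fun u v : L => (u == v)%:R * d u) = \prod_l ('X - (d l)%:P).
Proof.
rewrite /cp char_poly_trig; last first.
  apply/is_trig_mxP => i j lt_ij; rewrite mxE (inj_eq enum_val_inj).
  by rewrite -val_eqE /= ltn_eqF // mul0r.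
rewrite (reindex (fun i : 'I_#|L| => enum_val i)); last by apply: onW_bij; apply: enum_val_bij.
by apply: eq_bigr => i _; rewrite mxE eqxx mul1r.
Qed.


Lemma cp_AB m n (A : 'M[C]_(m, n)) (B : 'M[C]_(n, m)) :
  'X^n * char_poly (A *m B) = 'X^m * char_poly (B *m A).
Proof.
pose A' := map_mx polyC A; pose B' := map_mx polyC B.
pose M1 := block_mx (1%:M : 'M[{poly C}]_m) (- A') 0 ('X%:M : 'M_n).
pose M := block_mx ('X%:M : 'M[{poly C}]_m) A' B' (1%:M : 'M_n).
have e1 : M1 *m M = block_mx ('X%:M - A' *m B') 0 ('X *: B') ('X%:M).
  rewrite /M1 /M mulmx_block !mul1mx mulNmx !mul0mx !add0r mulmx1 addrN mul_scalar_mx.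
  by rewrite mulmx1.
have e2 : M *m M1 = block_mx ('X%:M) 0 B' ('X%:M - B' *m A').
  rewrite /M1 /M mulmx_block !mulmx1 !mulmx0 !addr0 !mulmxN mul_scalar_mx scale1r.
  by rewrite mul_scalar_mx mul_mx_scalar addNr addrC.
have : \det (M1 *m M) = \det (M *m M1) by rewrite !det_mulmx mulrC.
rewrite e1 e2 det_lblock det_lblock !det_scalar /char_poly /char_poly_mx !map_mxM.
by rewrite mulrC.
Qed.


Lemma char_poly_tr n (A : 'M[C]_n) : char_poly A^T = char_poly A.
Proof.
rewrite /char_poly -det_tr; congr (\det _); apply/matrixP => i j.
by rewrite !mxE eq_sym.
Qed.

Lemma vN_cp (K : finType) (rho : K -> K -> C) : vN_entropy rho = entp (cp rho).
Proof. by []. Qed.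

Lemma vN_ext (K : finType) (f g : K -> K -> C) : f =2 g -> vN_entropy f = vN_entropy g.
Proof. by move=> fg; rewrite !vN_cp (cp_ext fg). Qed.

Lemma vN_pure (K M : finType) (T : K -> M -> C) :
  vN_entropy (fun k k' => \sum_m T k m * (T k' m)^*) =
  vN_entropy (fun m m' => \sum_k T k m * (T k m')^*).
Proof.
rewrite !vN_cp; apply: (@entp_cancel #|M| #|K|); try exact: char_poly_monic.
rewrite /cp.
pose Tm := \matrix_(i < #|K|, j < #|M|) T (enum_val i) (enum_val j).
pose Sm := \matrix_(i < #|M|, j < #|K|) (T (enum_val j) (enum_val i))^*.
have -> : mx_of (fun k k' => \sum_m T k m * (T k' m)^*) = Tm *m Sm.
  apply/matrixP => i i'; rewrite !mxE.
  rewrite (reindex (fun j : 'I_#|M| => enum_val j)) /=; last by apply: onW_bij; apply: enum_val_bij.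
  by apply: eq_bigr => j _; rewrite !mxE.
have -> : mx_of (fun m m' => \sum_k T k m * (T k m')^*) = (Sm *m Tm)^T.
  apply/matrixP => i i'; rewrite !mxE.
  rewrite (reindex (fun j : 'I_#|K| => enum_val j)) /=; last by apply: onW_bij; apply: enum_val_bij.
  by apply: eq_bigr => j _; rewrite !mxE mulrC.
by rewrite char_poly_tr cp_AB.
Qed.

Lemma vN_block (L K : finType) (f : L -> K -> K -> C) :
  vN_entropy (fun u v : L * K => (u.1 == v.1)%:R * f u.1 u.2 v.2) =
  \sum_l vN_entropy (f l).
Proof.
rewrite vN_cp cp_block entp_bigprod //; last by move=> l; exact: char_poly_monic.
Qed.

Lemma vN_block2 (K L : finType) (f : L -> K -> K -> C) :
  vN_entropy (fun u v : K * L => (u.2 == v.2)%:R * f u.2 u.1 v.1) =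
  \sum_l vN_entropy (f l).
Proof.
rewrite -vN_block !vN_cp; congr entp.
pose e := fun p : K * L => (p.2, p.1).
have eb : bijective e by exists (fun p : L * K => (p.2, p.1)); case.
by rewrite -(cp_reindex _ eb).
Qed.

Lemma vN_diag (L : finType) (d : L -> C) :
  vN_entropy (fun u v : L => (u == v)%:R * d u) = \sum_l eta_fun (complex.Re (d l)).
Proof.
rewrite vN_cp cp_diag entp_bigprod; last by move=> l; apply: monicXsubC.
apply: eq_bigr => l _.
by have := entp_prod [:: d l]; rewrite !big_seq1.
Qed.

End Ent.

Section Main.
Variables (R : realType) (X A' Y B' : finType) (psi : X -> A' -> Y -> B' -> R[i]).

Let pX x := \sum_(m : Y * B') \sum_(a : A') psi x a m.1 m.2 * (psi x a m.1 m.2)^*.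
Let pY y := \sum_(k : X * A') \sum_(b : B') psi k.1 k.2 y b * (psi k.1 k.2 y b)^*.
Let gA x (a a' : A') := \sum_(m : Y * B') psi x a m.1 m.2 * (psi x a' m.1 m.2)^*.
Let gB y (b b' : B') := \sum_(k : X * A') psi k.1 k.2 y b * (psi k.1 k.2 y b')^*.
Let lA x y (a a' : A') := \sum_(b : B') psi x a y b * (psi x a' y b)^*.

Lemma q1E : qmutinf (rho_X_BB' psi) =
  \sum_x eta_fun (complex.Re (pX x))
  + vN_entropy (fun m m' : Y * B' => \sum_(k : X * A') psi k.1 k.2 m.1 m.2 * (psi k.1 k.2 m'.1 m'.2)^*)
  - \sum_x vN_entropy (gA x).
Proof.
have e1 : vN_entropy (ptrace2 (rho_X_BB' psi)) = \sum_x eta_fun (complex.Re (pX x)).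
  rewrite -vN_diag; apply: vN_ext => x x'; rewrite /ptrace2 /rho_X_BB' /pX /= mulr_sumr.
  by apply: eq_bigr => m _; have [<-|_] := eqVneq x x'; rewrite ?mul0r.
have e2 : vN_entropy (ptrace1 (rho_X_BB' psi)) = vN_entropy (fun m m' : Y * B' =>
     \sum_(k : X * A') psi k.1 k.2 m.1 m.2 * (psi k.1 k.2 m'.1 m'.2)^*).
  apply: vN_ext => m m'; rewrite /ptrace1 /rho_X_BB' /=.
  rewrite -(pair_bigA _ (fun x a => psi x a m.1 m.2 * (psi x a m'.1 m'.2)^*)) /=.
  by apply: eq_bigr => x _; rewrite eqxx mul1r.
pose f := fun x (m m' : Y * B') => \sum_(a : A') psi x a m.1 m.2 * (psi x a m'.1 m'.2)^*.
have e3 : vN_entropy (rho_X_BB' psi) = vN_entropy (fun u v : X * (Y * B') => (u.1 == v.1)%:R * f u.1 u.2 v.2).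
  apply: vN_ext => -[x m] [x' m']; rewrite /rho_X_BB' /f /=.
  by have [<-|_] := eqVneq x x'; rewrite ?mul0r.
rewrite /qmutinf e1 e2 e3 vN_block.
congr (_ - _); apply: eq_bigr => x _.
by rewrite /f -(vN_pure (fun a (m : Y * B') => psi x a m.1 m.2)).
Qed.



Lemma q2E : qmutinf (rho_AA'_Y psi) =
  vN_entropy (fun k k' : X * A' => \sum_(m : Y * B') psi k.1 k.2 m.1 m.2 * (psi k'.1 k'.2 m.1 m.2)^*)
  + \sum_y eta_fun (complex.Re (pY y))
  - \sum_y vN_entropy (gB y).
Proof.
have e1 : vN_entropy (ptrace2 (rho_AA'_Y psi)) = vN_entropy (fun k k' : X * A' =>
     \sum_(m : Y * B') psi k.1 k.2 m.1 m.2 * (psi k'.1 k'.2 m.1 m.2)^*).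
  apply: vN_ext => k k'; rewrite /ptrace2 /rho_AA'_Y /=.
  rewrite -(pair_bigA _ (fun y b => psi k.1 k.2 y b * (psi k'.1 k'.2 y b)^*)) /=.
  by apply: eq_bigr => y _; rewrite eqxx mul1r.
have e2 : vN_entropy (ptrace1 (rho_AA'_Y psi)) = \sum_y eta_fun (complex.Re (pY y)).
  rewrite -vN_diag; apply: vN_ext => y y'; rewrite /ptrace1 /rho_AA'_Y /pY /= mulr_sumr.
  by apply: eq_bigr => k _; have [<-|_] := eqVneq y y'; rewrite ?mul0r.
pose f := fun y (k k' : X * A') => \sum_(b : B') psi k.1 k.2 y b * (psi k'.1 k'.2 y b)^*.
have e3 : vN_entropy (rho_AA'_Y psi) = vN_entropy (fun u v : (X * A') * Y => (u.2 == v.2)%:R * f u.2 u.1 v.1).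
  apply: vN_ext => -[k y] [k' y']; rewrite /rho_AA'_Y /f /=.
  by have [<-|_] := eqVneq y y'; rewrite ?mul0r.
rewrite /qmutinf e1 e2 e3 vN_block2.
congr (_ - _); apply: eq_bigr => y _.
by rewrite /f (vN_pure (fun (k : X * A') b => psi k.1 k.2 y b)).
Qed.

Lemma q3E : qmutinf (rho_X_YB' psi) =
  \sum_x eta_fun (complex.Re (pX x))
  + \sum_y vN_entropy (gB y)
  - \sum_x \sum_y vN_entropy (lA x y).
Proof.
have e1 : vN_entropy (ptrace2 (rho_X_YB' psi)) = \sum_x eta_fun (complex.Re (pX x)).
  rewrite -vN_diag; apply: vN_ext => x x'; rewrite /ptrace2 /rho_X_YB' /pX /= mulr_sumr.
  by apply: eq_bigr => m _; rewrite eqxx mulr1; have [<-|_] := eqVneq x x'; rewrite ?mul0r.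
have e2 : vN_entropy (ptrace1 (rho_X_YB' psi)) =
    vN_entropy (fun u v : Y * B' => (u.1 == v.1)%:R * gB u.1 u.2 v.2).
  apply: vN_ext => -[y b] [y' b']; rewrite /ptrace1 /rho_X_YB' /gB /= mulr_sumr.
  rewrite -(pair_bigA _ (fun x a => (y == y')%:R * (psi x a y b * (psi x a y b')^*))) /=.
  apply: eq_bigr => x _; rewrite eqxx mul1r mulr_sumr.
  by apply: eq_bigr => a _; have [<-|_] := eqVneq y y'; rewrite ?mul0r.
pose f := fun x (m m' : Y * B') => (m.1 == m'.1)%:R *
   (fun y (b b' : B') => \sum_(a : A') psi x a y b * (psi x a y b')^*) m.1 m.2 m'.2.
have e3 : vN_entropy (rho_X_YB' psi) = vN_entropy (fun u v : X * (Y * B') => (u.1 == v.1)%:R * f u.1 u.2 v.2).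
  apply: vN_ext => -[x [y b]] [x' [y' b']]; rewrite /rho_X_YB' /f /=.
  have [<-|_] := eqVneq x x'; last by rewrite !mul0r.
  rewrite -mulrA; have [<-|_] := eqVneq y y'; by rewrite ?mul0r ?mulr0.
rewrite /qmutinf e1 e2 e3 !vN_block.
congr (_ - _); apply: eq_bigr => x _.
rewrite /f (vN_block (fun y (b b' : B') => \sum_(a : A') psi x a y b * (psi x a y b')^*)); apply: eq_bigr => y _.
by rewrite -(vN_pure (fun a b => psi x a y b)).
Qed.

Lemma q4E : qmutinf (rho_XA'_Y psi) =
  \sum_x vN_entropy (gA x)
  + \sum_y eta_fun (complex.Re (pY y))
  - \sum_x \sum_y vN_entropy (lA x y).
Proof.
have e1 : vN_entropy (ptrace2 (rho_XA'_Y psi)) =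
    vN_entropy (fun u v : X * A' => (u.1 == v.1)%:R * gA u.1 u.2 v.2).
  apply: vN_ext => -[x a] [x' a']; rewrite /ptrace2 /rho_XA'_Y /gA /= mulr_sumr.
  rewrite -(pair_bigA _ (fun y b => (x == x')%:R * (psi x a y b * (psi x a' y b)^*))) /=.
  apply: eq_bigr => y _; rewrite eqxx mulr1 mulr_sumr.
  by apply: eq_bigr => b _; have [<-|_] := eqVneq x x'; rewrite ?mul0r.
have e2 : vN_entropy (ptrace1 (rho_XA'_Y psi)) = \sum_y eta_fun (complex.Re (pY y)).
  rewrite -vN_diag; apply: vN_ext => y y'; rewrite /ptrace1 /rho_XA'_Y /pY /= mulr_sumr.
  by apply: eq_bigr => k _; rewrite eqxx mul1r; have [<-|_] := eqVneq y y'; rewrite ?mul0r.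
pose f := fun y (k k' : X * A') => (k.1 == k'.1)%:R *
   (fun x (a a' : A') => \sum_(b : B') psi x a y b * (psi x a' y b)^*) k.1 k.2 k'.2.
have e3 : vN_entropy (rho_XA'_Y psi) = vN_entropy (fun u v : (X * A') * Y => (u.2 == v.2)%:R * f u.2 u.1 v.1).
  apply: vN_ext => -[[x a] y] [[x' a'] y']; rewrite /rho_XA'_Y /f /=.
  have [<-|_] := eqVneq y y'; last by rewrite mulr0 !mul0r.
  by have [<-|_] := eqVneq x x'; rewrite ?mul0r ?mulr1 ?mul1r.
rewrite /qmutinf e1 e2 e3 vN_block vN_block2 exchange_big.
congr (_ - _); apply: eq_bigr => y _.
by rewrite /f (vN_block (fun x (a a' : A') => \sum_(b : B') psi x a y b * (psi x a' y b)^*)).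
Qed.
End Main.

Theorem lemma2 (R : realType) (X A' Y B' : finType)
  (P : X * Y -> R) (psi : X -> A' -> Y -> B' -> R[i]) :
  is_distr P ->
  is_embedding P psi ->
  leakage P psi = qmutinf (rho_X_BB' psi) - mutinf P /\
  leakage P psi = qmutinf (rho_AA'_Y psi) - mutinf P.
Proof.
move=> _ [_ [h3 h4]].
have eq : qmutinf (rho_X_BB' psi) = qmutinf (rho_AA'_Y psi).
  rewrite q1E q2E (vN_pure (fun (k : X * A') (m : Y * B') => psi k.1 k.2 m.1 m.2)).
  move: h3 h4; rewrite q3E q4E => h3 h4.
  lra.
by rewrite /leakage eq maxxx; split.
Qed.
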